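(* In the $3$-fold Cartesian product, a related component of a good set need not be a full component: the good set $T$ is full (so $T$ is its own unique full component), while every related component of $T$ is a singleton; in particular $T$ has infinitely many related components.
   Context: Let $X_1,X_2,X_3$ be pairwise disjoint nonempty sets and $\Omega=X_1\times X_2\times X_3$, with projections $\Pi_i:\Omega\to X_i$. A set $S\subset\Omega$ is good if every function $f:S\to\mathbb C$ can be written $f(w_1,w_2,w_3)=u_1(w_1)+u_2(w_2)+u_3(w_3)$ for all $(w_1,w_2,w_3)\in S$, for some functions $u_i:X_i\to\mathbb C$. A set $S$ is full if it is a maximal good subset of $\Pi_1S\times\Pi_2S\times\Pi_3S$. For a good set $S$, the maximal full subsets of $S$ are its full components (they partition $S$). Two points $p,q$ of a good set $S$ are related if some finite full subset of $S$ contains both; this is an equivalence relation whose classes are the related components of $S$. Construction: fix pairwise distinct elements $x_1,y_1,\alpha_{5k-4},\alpha_{5k-1}$ ($k\ge1$) of $X_1$; pairwise distinct elements $x_2,y_2,\alpha_{5k-3},\alpha_{5k}$ ($k\ge1$) of $X_2$; pairwise distinct elements $x_3,z_3,\alpha_{5k-2}$ ($k\ge1$) of $X_3$. Set the convention $\alpha_{-3}:=y_2$, $\alpha_{-2}:=z_3$. Define $a_1=(x_1,x_2,x_3)$, $a_2=(y_1,y_2,x_3)$, $a_3=(y_1,x_2,z_3)$ and for $n\ge1$: $a_{5n-1}=(\alpha_{5n-4},\alpha_{5n-3},\alpha_{5n-2})$, $a_{5n}=(\alpha_{5n-1},\alpha_{5n},\alpha_{5n-2})$, $a_{5n+1}=(\alpha_{5n-4},\alpha_{5n},\alpha_{5n-7})$,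 $a_{5n+2}=(\alpha_{5n-1},\alpha_{5n-3},x_3)$, $a_{5n+3}=(x_1,\alpha_{5n-8},\alpha_{5n-2})$. Let $T=\{a_i:i\ge1\}$. *)

(* Defs.v *)
From Stdlib Require Import Reals List Arith.
Import ListNotations.
Open Scope R_scope.

(* The complex numbers as an additive group: C = R x R with
   componentwise addition.  Goodness only uses addition in C. *)
Definition Cplx : Type := (R * R)%type.
Definition Cadd (a b : Cplx) : Cplx := (fst a + fst b, snd a + snd b).

Section Defs.
Variables X1 X2 X3 : Type.

Definition Omega : Type := (X1 * X2 * X3)%type.
Definition pi1 (w : Omega) : X1 := fst (fst w).
Definition pi2 (w : Omega) : X2 := snd (fst w).
Definition pi3 (w : Omega) : X3 := snd w.

Definition good (S : Omega -> Prop) : Prop :=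
  forall f : Omega -> Cplx,
    exists (u1 : X1 -> Cplx) (u2 : X2 -> Cplx) (u3 : X3 -> Cplx),
      forall w, S w -> f w = Cadd (Cadd (u1 (pi1 w)) (u2 (pi2 w))) (u3 (pi3 w)).

Definition box (S : Omega -> Prop) (w : Omega) : Prop :=
  (exists v, S v /\ pi1 v = pi1 w) /\
  (exists v, S v /\ pi2 v = pi2 w) /\
  (exists v, S v /\ pi3 v = pi3 w).

Definition full (S : Omega -> Prop) : Prop :=
  good S /\
  forall S' : Omega -> Prop,
    (forall w, S w -> S' w) -> (forall w, S' w -> box S w) -> good S' ->
    forall w, S' w -> S w.

Definition finite_set (S : Omega -> Prop) : Prop :=
  exists l : list Omega, forall w, S w -> In w l.

Definition related (S : Omega -> Prop) (p q : Omega) : Prop :=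
  exists F : Omega -> Prop,
    finite_set F /\ (forall w, F w -> S w) /\ full F /\ F p /\ F q.

(* The construction.  alpha_m for m >= 1 is given by al1 m (in X1, when
   m mod 5 is 1 or 4), al2 m (in X2, when m mod 5 is 2 or 0), al3 m
   (in X3, when m mod 5 is 3).  Conventions alpha_{-3} = y2, alpha_{-2} = z3. *)
Definition idx1 (m : nat) : Prop := (1 <= m)%nat /\ (m mod 5 = 1 \/ m mod 5 = 4)%nat.
Definition idx2 (m : nat) : Prop := (1 <= m)%nat /\ (m mod 5 = 2 \/ m mod 5 = 0)%nat.
Definition idx3 (m : nat) : Prop := (1 <= m)%nat /\ (m mod 5 = 3)%nat.

Variables (x1 y1 : X1) (x2 y2 : X2) (x3 z3 : X3).
Variables (al1 : nat -> X1) (al2 : nat -> X2) (al3 : nat -> X3).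

Definition alpha_5n_7 (n : nat) : X3 := if (n =? 1)%nat then z3 else al3 (5 * n - 7).
Definition alpha_5n_8 (n : nat) : X2 := if (n =? 1)%nat then y2 else al2 (5 * n - 8).

Definition T_a1 : Omega := (x1, x2, x3).
Definition T_a2 : Omega := (y1, y2, x3).
Definition T_a3 : Omega := (y1, x2, z3).
(* a_{5n-1}, a_{5n}, a_{5n+1}, a_{5n+2}, a_{5n+3} *)
Definition T_b0 (n : nat) : Omega := (al1 (5*n-4), al2 (5*n-3), al3 (5*n-2)).
Definition T_b1 (n : nat) : Omega := (al1 (5*n-1), al2 (5*n), al3 (5*n-2)).
Definition T_b2 (n : nat) : Omega := (al1 (5*n-4), al2 (5*n), alpha_5n_7 n).
Definition T_b3 (n : nat) : Omega := (al1 (5*n-1), al2 (5*n-3), x3).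
Definition T_b4 (n : nat) : Omega := (x1, alpha_5n_8 n, al3 (5*n-2)).

Definition Tset (w : Omega) : Prop :=
  w = T_a1 \/ w = T_a2 \/ w = T_a3 \/
  exists n : nat, (1 <= n)%nat /\
    (w = T_b0 n \/ w = T_b1 n \/ w = T_b2 n \/ w = T_b3 n \/ w = T_b4 n).

Definition distinct_data : Prop :=
  x1 <> y1 /\ (forall m, idx1 m -> al1 m <> x1 /\ al1 m <> y1) /\
  (forall m m', idx1 m -> idx1 m' -> al1 m = al1 m' -> m = m') /\
  x2 <> y2 /\ (forall m, idx2 m -> al2 m <> x2 /\ al2 m <> y2) /\
  (forall m m', idx2 m -> idx2 m' -> al2 m = al2 m' -> m = m') /\
  x3 <> z3 /\ (forall m, idx3 m -> al3 m <> x3 /\ al3 m <> z3) /\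
  (forall m m', idx3 m -> idx3 m' -> al3 m = al3 m' -> m = m').
End Defs.

(* Main.v *)
Require Import Defs.
From Stdlib Require Import Reals List Arith Lia Lra Classical ClassicalEpsilon.
Import ListNotations.
Open Scope R_scope.

Lemma m5 : forall a q r, (r < 5)%nat -> a = (q*5 + r)%nat -> (a mod 5 = r)%nat.
Proof. intros a q r Hr ->. rewrite Nat.add_comm, Nat.Div0.mod_add. apply Nat.mod_small; lia. Qed.

Lemma idx1_4 n : (1 <= n)%nat -> idx1 (5*n-4). Proof. intros; split; [lia|left; apply (m5 _ (n-1)); lia]. Qed.
Lemma idx1_1 n : (1 <= n)%nat -> idx1 (5*n-1). Proof. intros; split; [lia|right; apply (m5 _ (n-1)); lia]. Qed.
Lemma idx2_3 n : (1 <= n)%nat -> idx2 (5*n-3). Proof. intros; split; [lia|left; apply (m5 _ (n-1)); lia]. Qed.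
Lemma idx2_0 n : (1 <= n)%nat -> idx2 (5*n). Proof. intros; split; [lia|right; apply (m5 _ n); lia]. Qed.
Lemma idx2_8 n : (2 <= n)%nat -> idx2 (5*n-8). Proof. intros; split; [lia|left; apply (m5 _ (n-2)); lia]. Qed.
Lemma idx3_2 n : (1 <= n)%nat -> idx3 (5*n-2). Proof. intros; split; [lia|apply (m5 _ (n-1)); lia]. Qed.
Lemma idx3_7 n : (2 <= n)%nat -> idx3 (5*n-7). Proof. intros; split; [lia|apply (m5 _ (n-2)); lia]. Qed.

Ltac solve_idx := first [ apply idx1_4; lia | apply idx1_1; lia | apply idx2_3; lia | apply idx2_0; lia
  | apply idx2_8; lia | apply idx3_2; lia | apply idx3_7; lia ].

Definition ind {A : Type} (a b : A) : R := if excluded_middle_informative (a = b) then 1 else 0.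
Lemma ind_eq {A} (a b : A) : a = b -> ind a b = 1.
Proof. intros; unfold ind; destruct excluded_middle_informative; congruence. Qed.
Lemma ind_neq {A} (a b : A) : a <> b -> ind a b = 0.
Proof. intros; unfold ind; destruct excluded_middle_informative; congruence. Qed.

Definition lk (P : nat -> Prop) (V : nat -> R) : R :=
  match excluded_middle_informative (exists n, P n) with
  | left H => V (proj1_sig (constructive_indefinite_description _ H))
  | right _ => 0 end.
Lemma lk_spec P V n : P n -> (forall m, P m -> m = n) -> lk P V = V n.
Proof.
  intros Hn Hu; unfold lk; destruct excluded_middle_informative as [Hx|Hx].
  - destruct constructive_indefinite_description as [m Hm]; simpl; rewrite (Hu m Hm); auto.
  - exfalso; eauto.
Qed.

Definition sel {Y : Type} (w c1 c2 : Y) (v1 v2 : R) (f1 f2 : nat -> Y) (V1 V2 : nat -> R) : R :=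
  if excluded_middle_informative (w = c1) then v1 else
  if excluded_middle_informative (w = c2) then v2 else
  if excluded_middle_informative (exists n, (1 <= n)%nat /\ w = f1 n)
  then lk (fun n => (1 <= n)%nat /\ w = f1 n) V1
  else lk (fun n => (1 <= n)%nat /\ w = f2 n) V2.

Lemma sel_c1 {Y} (c1 c2 : Y) v1 v2 f1 f2 V1 V2 : sel c1 c1 c2 v1 v2 f1 f2 V1 V2 = v1.
Proof. unfold sel; destruct excluded_middle_informative; congruence. Qed.
Lemma sel_c2 {Y} (c1 c2 : Y) v1 v2 f1 f2 V1 V2 : c2 <> c1 -> sel c2 c1 c2 v1 v2 f1 f2 V1 V2 = v2.
Proof. intros; unfold sel; do 2 (destruct excluded_middle_informative; try congruence). Qed.
Lemma sel_f1 {Y} (c1 c2 : Y) v1 v2 f1 f2 V1 V2 n : (1 <= n)%nat -> f1 n <> c1 -> f1 n <> c2 ->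
  (forall m, (1 <= m)%nat -> f1 n = f1 m -> m = n) -> sel (f1 n) c1 c2 v1 v2 f1 f2 V1 V2 = V1 n.
Proof.
  intros; unfold sel; do 2 (destruct excluded_middle_informative; try congruence).
  destruct excluded_middle_informative as [Hx|Hx].
  - apply lk_spec; [split; auto| intros m [Hm1 Hm2]; auto].
  - exfalso; eauto.
Qed.
Lemma sel_f2 {Y} (c1 c2 : Y) v1 v2 f1 f2 V1 V2 n : (1 <= n)%nat -> f2 n <> c1 -> f2 n <> c2 ->
  (forall m, (1 <= m)%nat -> f2 n <> f1 m) ->
  (forall m, (1 <= m)%nat -> f2 n = f2 m -> m = n) -> sel (f2 n) c1 c2 v1 v2 f1 f2 V1 V2 = V2 n.
Proof.
  intros; unfold sel; do 2 (destruct excluded_middle_informative; try congruence).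
  destruct excluded_middle_informative as [[m [Hm1 Hm2]]|Hx].
  - exfalso; eapply H2; eauto.
  - apply lk_spec; [split; auto| intros m [Hm1 Hm2]; auto].
Qed.

Lemma max_ex (P : nat -> Prop) K : (exists n, P n) -> (forall n, P n -> (n <= K)%nat) ->
  exists N, P N /\ forall n, P n -> (n <= N)%nat.
Proof.
  revert P; induction K; intros P [n Hn] HK.
  - exists n; split; auto; intros m Hm; pose proof (HK m Hm); pose proof (HK n Hn) ; lia.
  - destruct (classic (P (S K))) as [H|H].
    + exists (S K); split; auto.
    + apply IHK; [eauto|]. intros m Hm. specialize (HK m Hm). destruct (Nat.eq_dec m (S K)); subst; [tauto|lia].
Qed.

Section Main.
Variables X1 X2 X3 : Type.
Variables (x1 y1 : X1) (x2 y2 : X2) (x3 z3 : X3).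
Variables (al1 : nat -> X1) (al2 : nat -> X2) (al3 : nat -> X3).
Hypothesis Hxy1 : x1 <> y1.
Hypothesis Ha1 : forall m, idx1 m -> al1 m <> x1 /\ al1 m <> y1.
Hypothesis Hi1 : forall m m', idx1 m -> idx1 m' -> al1 m = al1 m' -> m = m'.
Hypothesis Hxy2 : x2 <> y2.
Hypothesis Ha2 : forall m, idx2 m -> al2 m <> x2 /\ al2 m <> y2.
Hypothesis Hi2 : forall m m', idx2 m -> idx2 m' -> al2 m = al2 m' -> m = m'.
Hypothesis Hxy3 : x3 <> z3.
Hypothesis Ha3 : forall m, idx3 m -> al3 m <> x3 /\ al3 m <> z3.
Hypothesis Hi3 : forall m m', idx3 m -> idx3 m' -> al3 m = al3 m' -> m = m'.

Local Notation Om := (Omega X1 X2 X3).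
Local Notation p1 := (pi1 X1 X2 X3).
Local Notation p2 := (pi2 X1 X2 X3).
Local Notation p3 := (pi3 X1 X2 X3).
Local Notation T := (Tset X1 X2 X3 x1 y1 x2 y2 x3 z3 al1 al2 al3).
Local Notation a1 := (T_a1 X1 X2 X3 x1 x2 x3).
Local Notation a2 := (T_a2 X1 X2 X3 y1 y2 x3).
Local Notation a3 := (T_a3 X1 X2 X3 y1 x2 z3).
Local Notation b0 := (T_b0 X1 X2 X3 al1 al2 al3).
Local Notation b1 := (T_b1 X1 X2 X3 al1 al2 al3).
Local Notation b2 := (T_b2 X1 X2 X3 z3 al1 al2 al3).
Local Notation b3 := (T_b3 X1 X2 X3 x3 al1 al2).
Local Notation b4 := (T_b4 X1 X2 X3 x1 y2 al2 al3).

Ltac dis_h H :=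
  match type of H with
  | al1 ?i = al1 ?j => assert (i = j) by (apply Hi1; [solve_idx|solve_idx|exact H]); lia
  | al2 ?i = al2 ?j => assert (i = j) by (apply Hi2; [solve_idx|solve_idx|exact H]); lia
  | al3 ?i = al3 ?j => assert (i = j) by (apply Hi3; [solve_idx|solve_idx|exact H]); lia
  | al1 ?i = x1 => exact (proj1 (Ha1 i ltac:(solve_idx)) H)
  | al1 ?i = y1 => exact (proj2 (Ha1 i ltac:(solve_idx)) H)
  | x1 = al1 ?i => exact (proj1 (Ha1 i ltac:(solve_idx)) (eq_sym H))
  | y1 = al1 ?i => exact (proj2 (Ha1 i ltac:(solve_idx)) (eq_sym H))
  | al2 ?i = x2 => exact (proj1 (Ha2 i ltac:(solve_idx)) H)
  | al2 ?i = y2 => exact (proj2 (Ha2 i ltac:(solve_idx)) H)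
  | x2 = al2 ?i => exact (proj1 (Ha2 i ltac:(solve_idx)) (eq_sym H))
  | y2 = al2 ?i => exact (proj2 (Ha2 i ltac:(solve_idx)) (eq_sym H))
  | al3 ?i = x3 => exact (proj1 (Ha3 i ltac:(solve_idx)) H)
  | al3 ?i = z3 => exact (proj2 (Ha3 i ltac:(solve_idx)) H)
  | x3 = al3 ?i => exact (proj1 (Ha3 i ltac:(solve_idx)) (eq_sym H))
  | z3 = al3 ?i => exact (proj2 (Ha3 i ltac:(solve_idx)) (eq_sym H))
  | x1 = y1 => exact (Hxy1 H)
  | y1 = x1 => exact (Hxy1 (eq_sym H))
  | x2 = y2 => exact (Hxy2 H)
  | y2 = x2 => exact (Hxy2 (eq_sym H))
  | x3 = z3 => exact (Hxy3 H)
  | z3 = x3 => exact (Hxy3 (eq_sym H))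
  end.
Ltac dis := let H := fresh "Hd" in intro H; dis_h H.

Ltac unalpha := unfold alpha_5n_7, alpha_5n_8 in *;
  repeat match goal with |- context [Nat.eqb ?n 1] => destruct (Nat.eqb_spec n 1); try (exfalso; lia) end.

Ltac eval_ind := repeat match goal with |- context [ind ?a ?b] =>
   first [ rewrite (ind_eq a b) by (reflexivity || (f_equal; lia)) | rewrite (ind_neq a b) by dis ] end.

Ltac unpt := unfold T_a1, T_a2, T_a3, T_b0, T_b1, T_b2, T_b3, T_b4, pi1, pi2, pi3 in *; cbn [fst snd] in *.

Lemma test_dis m N : (2 <= m)%nat -> (m < N)%nat -> al2 (5*m-8) <> al2 (5*N-3).
Proof. intros. dis. Qed.


Section Good.
Variable f : Om -> R.
Definition gg n := f (b0 n) + f (b1 n) - f (b2 n) - f (b3 n).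
Definition zz := 2/3 * (f a3 - f a2 - f a1 + f (b4 1%nat) - gg 1 / 2).
Fixpoint CC k := match k with O => zz | S k' => (gg (S k') + CC k')/2 end.
Definition BB n := f (b4 (S n)) - CC (S n).
Definition AA n := f (b0 n) - BB n - CC n.
Definition EE n := f (b2 n) - CC (n-1) - AA n.
Definition DD n := f (b1 n) - CC n - EE n.
Definition u1 w := sel w x1 y1 0 (f a2 - BB 0) (fun n => al1 (5*n-4)) (fun n => al1 (5*n-1)) AA DD.
Definition u2 w := sel w x2 y2 (f a1) (BB 0) (fun n => al2 (5*n-3)) (fun n => al2 (5*n)) BB EE.
Definition u3 w := sel w x3 z3 0 zz (fun n => al3 (5*n-2)) (fun n => al3 (5*n-2)) CC CC.

Ltac uniq_tac := let m := fresh "m" in let Hm := fresh "Hm" in let He := fresh "He" in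
  intros m Hm He; cbv beta in He;
  first [ apply Hi1 in He | apply Hi2 in He | apply Hi3 in He ]; try solve_idx; lia.
Ltac sf_tac := cbv beta; try dis.

Lemma u1_x1 : u1 x1 = 0. Proof. apply sel_c1. Qed.
Lemma u1_y1 : u1 y1 = f a2 - BB 0. Proof. apply sel_c2. auto. Qed.
Lemma u1_A n : (1 <= n)%nat -> u1 (al1 (5*n-4)) = AA n.
Proof. intros. apply (sel_f1 _ _ _ _ (fun n => al1 (5*n-4))); auto; try sf_tac. uniq_tac. Qed.
Lemma u1_D n : (1 <= n)%nat -> u1 (al1 (5*n-1)) = DD n.
Proof. intros. apply (sel_f2 _ _ _ _ (fun n => al1 (5*n-4)) (fun n => al1 (5*n-1))); auto; try sf_tac.
  intros m Hm; cbv beta; dis. uniq_tac. Qed.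
Lemma u2_x2 : u2 x2 = f a1. Proof. apply sel_c1. Qed.
Lemma u2_y2 : u2 y2 = BB 0. Proof. apply sel_c2. auto. Qed.
Lemma u2_B n : (1 <= n)%nat -> u2 (al2 (5*n-3)) = BB n.
Proof. intros. apply (sel_f1 _ _ _ _ (fun n => al2 (5*n-3))); auto; try sf_tac. uniq_tac. Qed.
Lemma u2_E n : (1 <= n)%nat -> u2 (al2 (5*n)) = EE n.
Proof. intros. apply (sel_f2 _ _ _ _ (fun n => al2 (5*n-3)) (fun n => al2 (5*n))); auto; try sf_tac.
  intros m Hm; cbv beta; dis. uniq_tac. Qed.
Lemma u3_x3 : u3 x3 = 0. Proof. apply sel_c1. Qed.
Lemma u3_z3 : u3 z3 = zz. Proof. apply sel_c2. auto. Qed.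
Lemma u3_C n : (1 <= n)%nat -> u3 (al3 (5*n-2)) = CC n.
Proof. intros. apply (sel_f1 _ _ _ _ (fun n => al3 (5*n-2))); auto; try sf_tac. uniq_tac. Qed.

Lemma u3_P n : (1 <= n)%nat -> u3 (alpha_5n_7 X3 z3 al3 n) = CC (n-1).
Proof. intros. unfold alpha_5n_7. destruct (Nat.eqb_spec n 1).
  - subst; simpl. apply u3_z3.
  - replace (5*n-7)%nat with (5*(n-1)-2)%nat by lia. apply u3_C. lia. Qed.
Lemma u2_Q n : (1 <= n)%nat -> u2 (alpha_5n_8 X2 y2 al2 n) = BB (n-1).
Proof. intros. unfold alpha_5n_8. destruct (Nat.eqb_spec n 1).
  - subst; simpl. apply u2_y2.
  - replace (5*n-8)%nat with (5*(n-1)-3)%nat by lia. rewrite u2_B by lia. reflexivity. Qed.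

Lemma CC_S n : (1 <= n)%nat -> CC n = (gg n + CC (n-1))/2.
Proof. intros. destruct n; [lia|]. replace (S n - 1)%nat with n by lia. reflexivity. Qed.

Lemma goodR : forall w, T w -> f w = u1 (p1 w) + u2 (p2 w) + u3 (p3 w).
Proof.
  intros w [ -> | [ -> | [ -> | [n [Hn [ -> | [ -> | [ -> | [ -> | -> ]]]]]]]]]; unfold pi1, pi2, pi3;
  cbn [fst snd T_a1 T_a2 T_a3 T_b0 T_b1 T_b2 T_b3 T_b4].
  - rewrite u1_x1, u2_x2, u3_x3; unfold T_a1; ring.
  - rewrite u1_y1, u2_y2, u3_x3; unfold T_a2; ring.
  - rewrite u1_y1, u2_x2, u3_z3. unfold BB. simpl CC. unfold zz, gg, T_a1, T_a2, T_a3. field.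
  - rewrite u1_A, u2_B, u3_C by lia. unfold AA, T_b0; ring.
  - rewrite u1_D, u2_E, u3_C by lia. unfold DD, T_b1; ring.
  - rewrite u1_A, u2_E, u3_P by lia. unfold EE, T_b2; ring.
  - rewrite u1_D, u2_B, u3_x3 by lia. unfold DD, EE, AA. rewrite (CC_S n Hn). unfold gg, T_b0, T_b1, T_b2, T_b3. field.
  - rewrite u1_x1, u2_Q, u3_C by lia. unfold BB. replace (S (n-1)) with n by lia. unfold T_b4; ring.
Qed.
End Good.

Lemma goodT : good X1 X2 X3 T.
Proof.
  intros f.
  set (fr := fun w => fst (f w)). set (fi := fun w => snd (f w)).
  exists (fun z => (u1 fr z, u1 fi z)), (fun z => (u2 fr z, u2 fi z)), (fun z => (u3 fr z, u3 fi z)).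
  intros w Hw. unfold Cadd; cbn [fst snd].
  rewrite <- (goodR fr w Hw), <- (goodR fi w Hw). unfold fr, fi. destruct (f w); reflexivity.
Qed.

Lemma Ta1 : T a1. Proof. left; reflexivity. Qed.
Lemma Ta2 : T a2. Proof. right; left; reflexivity. Qed.
Lemma Ta3 : T a3. Proof. right; right; left; reflexivity. Qed.
Lemma Tb0 n : (1 <= n)%nat -> T (b0 n). Proof. intros; right; right; right; exists n; split; [lia|tauto]. Qed.
Lemma Tb1 n : (1 <= n)%nat -> T (b1 n). Proof. intros; right; right; right; exists n; split; [lia|tauto]. Qed.
Lemma Tb2 n : (1 <= n)%nat -> T (b2 n). Proof. intros; right; right; right; exists n; split; [lia|tauto]. Qed.
Lemma Tb3 n : (1 <= n)%nat -> T (b3 n). Proof. intros; right; right; right; exists n; split; [lia|tauto]. Qed.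
Lemma Tb4 n : (1 <= n)%nat -> T (b4 n). Proof. intros; right; right; right; exists n; split; [lia|tauto]. Qed.

Lemma P_eq n : (1 <= n)%nat -> alpha_5n_7 X3 z3 al3 (S n) = al3 (5*n-2).
Proof. intros; unfold alpha_5n_7. destruct (Nat.eqb_spec (S n) 1); [lia|]. f_equal; lia. Qed.
Lemma Q_eq n : (1 <= n)%nat -> alpha_5n_8 X2 y2 al2 (S n) = al2 (5*n-3).
Proof. intros; unfold alpha_5n_8. destruct (Nat.eqb_spec (S n) 1); [lia|]. f_equal; lia. Qed.

Section Zero.
Variables (s1 : X1 -> R) (s2 : X2 -> R) (s3 : X3 -> R).
Hypothesis Hz : forall v, T v -> s1 (p1 v) + s2 (p2 v) + s3 (p3 v) = 0.
Hypothesis H1 : s1 x1 = 0.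
Hypothesis H3 : s3 x3 = 0.

Lemma eqs n : (1 <= n)%nat ->
  s1 (al1 (5*n-4)) + s2 (al2 (5*n-3)) + s3 (al3 (5*n-2)) = 0 /\
  s1 (al1 (5*n-1)) + s2 (al2 (5*n)) + s3 (al3 (5*n-2)) = 0 /\
  s1 (al1 (5*n-4)) + s2 (al2 (5*n)) + s3 (alpha_5n_7 X3 z3 al3 n) = 0 /\
  s1 (al1 (5*n-1)) + s2 (al2 (5*n-3)) = 0 /\
  s2 (alpha_5n_8 X2 y2 al2 n) + s3 (al3 (5*n-2)) = 0.
Proof.
  intros Hn. pose proof (Hz _ (Tb0 n Hn)). pose proof (Hz _ (Tb1 n Hn)). pose proof (Hz _ (Tb2 n Hn)).
  pose proof (Hz _ (Tb3 n Hn)). pose proof (Hz _ (Tb4 n Hn)).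
  unfold pi1, pi2, pi3, T_b0, T_b1, T_b2, T_b3, T_b4 in *; cbn [fst snd] in *.
  rewrite H3 in *. rewrite H1 in *. repeat split; lra.
Qed.

Lemma init : s2 x2 = 0 /\ s1 y1 = 0 /\ s2 y2 = 0 /\ s3 z3 = 0 /\ s3 (al3 (5*1-2)) = 0.
Proof.
  pose proof (Hz _ Ta1). pose proof (Hz _ Ta2). pose proof (Hz _ Ta3).
  destruct (eqs 1 (le_n _)) as (E0 & E1 & E2 & E3 & E4).
  unfold alpha_5n_7, alpha_5n_8 in *; simpl Nat.eqb in *; cbv iota in *.
  unfold pi1, pi2, pi3, T_a1, T_a2, T_a3 in *; cbn [fst snd] in *.
  rewrite H1, H3 in *. repeat split; lra.
Qed.

Lemma Czero n : (1 <= n)%nat -> s3 (al3 (5*n-2)) = 0.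
Proof.
  induction n; intros Hn; [lia|]. destruct (Nat.eq_dec n 0).
  - subst. apply init.
  - destruct (eqs (S n) Hn) as (E0 & E1 & E2 & E3 & E4). rewrite P_eq in E2 by lia.
    rewrite IHn in E2 by lia. lra.
Qed.

Lemma Pzero n : (1 <= n)%nat -> s3 (alpha_5n_7 X3 z3 al3 n) = 0.
Proof. intros. destruct n; [lia|]. destruct (Nat.eq_dec n 0).
  - subst. unfold alpha_5n_7. simpl. apply init.
  - rewrite P_eq by lia. apply Czero. lia. Qed.

Lemma Bzero n : (1 <= n)%nat -> s2 (al2 (5*n-3)) = 0.
Proof. intros. destruct (eqs (S n) ltac:(lia)) as (E0 & E1 & E2 & E3 & E4). rewrite Q_eq in E4 by lia.
  rewrite Czero in E4 by lia. lra. Qed.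

Lemma Qzero n : (1 <= n)%nat -> s2 (alpha_5n_8 X2 y2 al2 n) = 0.
Proof. intros. destruct (eqs n H) as (E0 & E1 & E2 & E3 & E4). rewrite Czero in E4 by lia. lra. Qed.

Lemma allzero : forall v, T v -> s1 (p1 v) = 0 /\ s2 (p2 v) = 0 /\ s3 (p3 v) = 0.
Proof.
  pose proof init as (I1 & I2 & I3 & I4 & I5).
  intros w [ -> | [ -> | [ -> | [n [Hn [ -> | [ -> | [ -> | [ -> | -> ]]]]]]]]];
  try (destruct (eqs n Hn) as (E0 & E1 & E2 & E3 & E4);
       pose proof (Czero n Hn); pose proof (Pzero n Hn); pose proof (Bzero n Hn); pose proof (Qzero n Hn));
  unfold pi1, pi2, pi3, T_a1, T_a2, T_a3, T_b0, T_b1, T_b2, T_b3, T_b4 in *; cbn [fst snd] in *;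
  repeat split; lra.
Qed.
End Zero.

Lemma fullT : full X1 X2 X3 T.
Proof.
  split; [apply goodT|]. intros S' HTS HSbox HS w Hw.
  apply NNPP; intros HnT.
  pose (fd := fun v : Om => if excluded_middle_informative (v = w) then ((1,0):Cplx) else (0,0)).
  destruct (HS fd) as (u1' & u2' & u3' & Hu).
  set (r1 := fun z => fst (u1' z)). set (r2 := fun z => fst (u2' z)). set (r3 := fun z => fst (u3' z)).
  assert (Hr : forall v, S' v -> fst (fd v) = r1 (p1 v) + r2 (p2 v) + r3 (p3 v)).
  { intros v Hv. rewrite (Hu v Hv). unfold Cadd; cbn [fst snd]. reflexivity. }
  set (s1 := fun z => r1 z - r1 x1). set (s2 := fun z => r2 z + r1 x1 + r3 x3). set (s3 := fun z => r3 z - r3 x3).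
  assert (Hz : forall v, T v -> s1 (p1 v) + s2 (p2 v) + s3 (p3 v) = 0).
  { intros v Hv. pose proof (Hr v (HTS v Hv)) as E. unfold fd in E. revert E; destruct (excluded_middle_informative (v = w)) as [e|e]; intro E.
    - subst; contradiction.
    - unfold s1, s2, s3; simpl in E; lra. }
  assert (Hs1 : s1 x1 = 0) by (unfold s1; ring). assert (Hs3 : s3 x3 = 0) by (unfold s3; ring).
  pose proof (Hr w Hw) as E. unfold fd in E. revert E; destruct (excluded_middle_informative (w = w)) as [_|e]; [intro E|tauto]. simpl in E.
  destruct (HSbox w Hw) as ([v1 [Hv1 E1]] & [v2 [Hv2 E2]] & [v3 [Hv3 E3]]).
  pose proof (allzero s1 s2 s3 Hz Hs1 Hs3 v1 Hv1) as (Z1 & _ & _).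
  pose proof (allzero s1 s2 s3 Hz Hs1 Hs3 v2 Hv2) as (_ & Z2 & _).
  pose proof (allzero s1 s2 s3 Hz Hs1 Hs3 v3 Hv3) as (_ & _ & Z3).
  rewrite E1 in Z1; rewrite E2 in Z2; rewrite E3 in Z3. unfold s1, s2, s3 in *. lra.
Qed.

Definition dsum (d1 : X1 -> R) (d2 : X2 -> R) (d3 : X3 -> R) (v : Om) := d1 (p1 v) + d2 (p2 v) + d3 (p3 v).

Lemma nf (F : Om -> Prop) (HFT : forall v, F v -> T v) (Hfull : full X1 X2 X3 F)
  v1 v2 v3 (Hv1 : F v1) (Hv2 : F v2) (Hv3 : F v3) d1 d2 d3
  (Hz : forall v, F v -> dsum d1 d2 d3 v = 0)
  (Hw : d1 (p1 v1) + d2 (p2 v2) + d3 (p3 v3) <> 0) : False.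
Proof.
  set (w := ((p1 v1, p2 v2, p3 v3)) : Om).
  assert (HS : forall v, F v \/ v = w -> F v).
  { apply (proj2 Hfull).
    - intros; left; auto.
    - intros v [Hv| ->].
      + split; [|split]; exists v; auto.
      + split; [|split]; [exists v1|exists v2|exists v3]; split; auto.
    - intros f. destruct (goodT f) as (u1' & u2' & u3' & Hu).
      set (dw := d1 (p1 v1) + d2 (p2 v2) + d3 (p3 v3)).
      set (U := Cadd (Cadd (u1' (p1 w)) (u2' (p2 w))) (u3' (p3 w))).
      set (t1 := (fst (f w) - fst U) / dw). set (t2 := (snd (f w) - snd U) / dw).
      exists (fun z => Cadd (u1' z) (t1 * d1 z, t2 * d1 z)),
             (fun z => Cadd (u2' z) (t1 * d2 z, t2 * d2 z)),
             (fun z => Cadd (u3' z) (t1 * d3 z, t2 * d3 z)).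
      intros v [Hv | ->].
      + rewrite (Hu v (HFT v Hv)). pose proof (Hz v Hv) as E. unfold dsum in E.
        unfold Cadd; cbn [fst snd]. apply injective_projections; cbn [fst snd].
        * assert (H0 : t1 * d1 (p1 v) + t1 * d2 (p2 v) + t1 * d3 (p3 v) = 0)
            by (replace 0 with (t1 * 0) by ring; rewrite <- E; ring). lra.
        * assert (H0 : t2 * d1 (p1 v) + t2 * d2 (p2 v) + t2 * d3 (p3 v) = 0)
            by (replace 0 with (t2 * 0) by ring; rewrite <- E; ring). lra.
      + unfold U in t1, t2. unfold Cadd in *; cbn [fst snd] in *.
        assert (Hpw : p1 w = p1 v1 /\ p2 w = p2 v2 /\ p3 w = p3 v3) by (unfold w, pi1, pi2, pi3; simpl; auto).
        destruct Hpw as (-> & -> & ->). fold dw.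
        apply injective_projections; cbn [fst snd]; unfold t1, t2; change (p1 w) with (p1 v1); change (p2 w) with (p2 v2); change (p3 w) with (p3 v3); unfold dw; field; exact Hw. }
  assert (Fw : F w) by (apply HS; right; reflexivity).
  pose proof (Hz w Fw) as E. unfold dsum, w, pi1, pi2, pi3 in E; simpl in E.
  apply Hw. unfold pi1, pi2, pi3. exact E.
Qed.

Definition inblk (v : Om) n := v = b0 n \/ v = b1 n \/ v = b2 n \/ v = b3 n \/ v = b4 n.
Definition in4 (v : Om) n := v = b0 n \/ v = b1 n \/ v = b2 n \/ v = b3 n.

Lemma blk_inj v n m : (1 <= n)%nat -> (1 <= m)%nat -> inblk v n -> inblk v m -> n = m.
Proof.
  intros Hn Hm H1 H2. destruct (Nat.eq_dec n m) as [|Hnm]; auto. exfalso.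
  unfold inblk in *.
  destruct H1 as [->|[->|[->|[->| ->]]]]; destruct H2 as [E|[E|[E|[E|E]]]]; revert E; unpt; unalpha;
  intro E; injection E; intros;
  match goal with H : _ = _ |- _ => dis_h H end.
Qed.

Lemma bound (l : list Om) : exists K, forall v n, In v l -> (1 <= n)%nat -> inblk v n -> (n <= K)%nat.
Proof.
  induction l as [|a l [K IH]].
  - exists O; intros v n [].
  - destruct (classic (exists n, (1 <= n)%nat /\ inblk a n)) as [[n0 [Hn0 Ha]]|Hna].
    + exists (K + n0)%nat. intros v n [<-|Hv] Hn Hb.
      * pose proof (blk_inj a n n0 Hn Hn0 Hb Ha). lia.
      * pose proof (IH v n Hv Hn Hb). lia.
    + exists K. intros v n [<-|Hv] Hn Hb.
      * exfalso; eauto.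
      * eauto.
Qed.

Definition tp1 M z := -(ind z (al1 (5*M-4))) - ind z (al1 (5*M-1)).
Definition tp2 M z := ind z (al2 (5*M-3)) + ind z (al2 (5*M)).
Definition zero3 (z : X3) : R := 0.

Ltac bash := unfold dsum, tp1, tp2, zero3 in *; unpt; unalpha; eval_ind; try lra; try (intro; lra).

Lemma top_zero M v : (1 <= M)%nat -> T v -> (forall n, (1 <= n)%nat -> inblk v n -> (n <= M)%nat) ->
  dsum (tp1 M) (tp2 M) zero3 v = 0.
Proof.
  intros HM Hv Hb. destruct Hv as [ -> | [ -> | [ -> | [n [Hn Hc]]]]]; [bash|bash|bash|].
  pose proof (Hb n Hn Hc). destruct (Nat.eq_dec n M) as [<-|].
  - destruct Hc as [ -> | [ -> | [ -> | [ -> | -> ]]]]; bash.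
  - destruct Hc as [ -> | [ -> | [ -> | [ -> | -> ]]]]; bash.
Qed.

Lemma key3 (F : Om -> Prop) (Hfin : finite_set X1 X2 X3 F) (HFT : forall v, F v -> T v)
  (Hfull : full X1 X2 X3 F) p q (Hp : F p) (Hq : F q) (Hpq : p <> q) : False.
Proof.
  destruct Hfin as [l Hl].
  set (HB := fun n => (1 <= n)%nat /\ exists v, F v /\ inblk v n).
  destruct (classic (exists n, HB n)) as [Hex|Hnone].
  - destruct (bound l) as [K HK].
    destruct (max_ex HB K Hex) as [N [[HN1 [v0 [Fv0 Bv0]]] HNmax]].
    { intros n [Hn [v [Fv Bv]]]; exact (HK v n (Hl v Fv) Hn Bv). }
    assert (Hblk : forall v n, F v -> (1 <= n)%nat -> inblk v n -> (n <= N)%nat).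
    { intros v n Fv Hn Bv. apply HNmax. split; eauto. }
    clear HK Hl HNmax Hex.
    destruct (classic (exists v, F v /\ in4 v N)) as [[pp [Fpp Ipp]] | Hno4].
    + destruct (classic (exists qq, F qq /\ ~ in4 qq N)) as [[qq [Fqq Nqq]]|Hall].
      * apply (nf F HFT Hfull pp qq pp Fpp Fqq Fpp (tp1 N) (tp2 N) zero3).
        { intros v Fv. apply top_zero; auto. intros; eapply Hblk; eauto. }
        assert (A1 : tp1 N (p1 pp) = -1) by (destruct Ipp as [ -> | [ -> | [ -> | -> ]]]; bash).
        assert (A2 : tp2 N (p2 qq) = 0).
        { destruct (HFT qq Fqq) as [ -> | [ -> | [ -> | [n [Hn Hc]]]]]; [bash|bash|bash|].
          pose proof (Hblk qq n Fqq Hn Hc). destruct (Nat.eq_dec n N) as [->|].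
          - destruct Hc as [ -> | [ -> | [ -> | [ -> | -> ]]]];
              try (exfalso; apply Nqq; unfold in4; tauto); bash.
          - destruct Hc as [ -> | [ -> | [ -> | [ -> | -> ]]]]; bash. }
        unfold zero3. intro; lra.
      * assert (Hin : forall v, F v -> in4 v N).
        { intros v Fv. apply NNPP. intro. apply Hall. eauto. }
        set (d1 := fun z => - ind z (al1 (5*N-4))).
        set (d2 := fun z => ind z (al2 (5*N-3))).
        set (d3 := fun z => ind z (alpha_5n_7 X3 z3 al3 N) - ind z x3).
        assert (Hz : forall v, F v -> dsum d1 d2 d3 v = 0).
        { intros v Fv. destruct (Hin v Fv) as [ -> | [ -> | [ -> | -> ]]]; unfold d1, d2, d3; bash. }
        destruct (Hin p Hp) as [ -> | [ -> | [ -> | -> ]]]; destruct (Hin q Hq) as [ -> | [ -> | [ -> | -> ]]];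
        try congruence;
        first [ apply (nf F HFT Hfull (b0 N) (b1 N) (b0 N) ltac:(assumption) ltac:(assumption) ltac:(assumption) d1 d2 d3 Hz); unfold d1, d2, d3; bash
              | apply (nf F HFT Hfull (b0 N) (b2 N) (b0 N) ltac:(assumption) ltac:(assumption) ltac:(assumption) d1 d2 d3 Hz); unfold d1, d2, d3; bash
              | apply (nf F HFT Hfull (b3 N) (b0 N) (b0 N) ltac:(assumption) ltac:(assumption) ltac:(assumption) d1 d2 d3 Hz); unfold d1, d2, d3; bash
              | apply (nf F HFT Hfull (b1 N) (b2 N) (b2 N) ltac:(assumption) ltac:(assumption) ltac:(assumption) d1 d2 d3 Hz); unfold d1, d2, d3; bash
              | apply (nf F HFT Hfull (b3 N) (b2 N) (b2 N) ltac:(assumption) ltac:(assumption) ltac:(assumption) d1 d2 d3 Hz); unfold d1, d2, d3; bash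
              | apply (nf F HFT Hfull (b1 N) (b1 N) (b3 N) ltac:(assumption) ltac:(assumption) ltac:(assumption) d1 d2 d3 Hz); unfold d1, d2, d3; bash ].
    + assert (Fb4 : F (b4 N)).
      { destruct Bv0 as [ -> | [ -> | [ -> | [ -> | -> ]]]]; auto;
        (exfalso; apply Hno4; eexists; split; [eassumption|unfold in4; tauto]). }
      assert (Hsh : forall v, F v -> v = a1 \/ v = a2 \/ v = a3 \/ v = b4 N \/
                    exists n, (1 <= n)%nat /\ (n < N)%nat /\ inblk v n).
      { intros v Fv. destruct (HFT v Fv) as [ -> | [ -> | [ -> | [n [Hn Hc]]]]]; auto.
        pose proof (Hblk v n Fv Hn Hc). destruct (Nat.eq_dec n N) as [->|].
        - destruct Hc as [ -> | [ -> | [ -> | [ -> | -> ]]]]; auto;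
            (exfalso; apply Hno4; eexists; split; [eassumption|unfold in4; tauto]).
        - right; right; right; right. exists n; split; [lia|split; [lia|auto]]. }
      assert (Hr : exists r, F r /\ r <> b4 N).
      { destruct (classic (p = b4 N)); [exists q; split; auto; congruence | exists p; auto]. }
      destruct Hr as [r [Fr Hrn]].
      destruct (Nat.eq_dec N 1) as [->|HN2].
      * set (d1 := fun z => - ind z y1).
        set (d2 := fun z => ind z y2).
        set (d3 := fun z => ind z z3 - ind z (al3 (5*1-2))).
        assert (Hz : forall v, F v -> dsum d1 d2 d3 v = 0).
        { intros v Fv. destruct (Hsh v Fv) as [ -> | [ -> | [ -> | [ -> | [n [Hn [Hn' _]]]]]]];
          [..|lia]; unfold d1, d2, d3; bash. }
        apply (nf F HFT Hfull (b4 1) (b4 1) r Fb4 Fb4 Fr d1 d2 d3 Hz).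
        destruct (Hsh r Fr) as [ -> | [ -> | [ -> | [ -> | [n [Hn [Hn' _]]]]]]]; [..|congruence|lia];
          unfold d1, d2, d3; bash.
      * set (d3 := fun z => - ind z (al3 (5*N-2))).
        assert (Hz : forall v, F v -> dsum (tp1 (N-1)) (tp2 (N-1)) d3 v = 0).
        { intros v Fv. destruct (Hsh v Fv) as [ -> | [ -> | [ -> | [ -> | [n [Hn [Hn' Hc]]]]]]];
          [unfold d3; bash..|].
          destruct (Nat.eq_dec n (N-1)) as [->|];
          destruct Hc as [ -> | [ -> | [ -> | [ -> | -> ]]]]; unfold d3; bash. }
        apply (nf F HFT Hfull (b4 N) (b4 N) r Fb4 Fb4 Fr _ _ d3 Hz).
        destruct (Hsh r Fr) as [ -> | [ -> | [ -> | [ -> | [n [Hn [Hn' Hc]]]]]]]; [unfold d3; bash..|congruence|].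
        destruct Hc as [ -> | [ -> | [ -> | [ -> | -> ]]]]; unfold d3; bash.
  - assert (Ha : forall v, F v -> v = a1 \/ v = a2 \/ v = a3).
    { intros v Fv. destruct (HFT v Fv) as [ -> | [ -> | [ -> | [n [Hn Hc]]]]]; auto.
      exfalso; apply Hnone; exists n; split; eauto. }
    set (d1 := fun z => - ind z y1).
    set (d2 := fun z => ind z y2).
    set (d3 := fun z => ind z z3).
    assert (Hz : forall v, F v -> dsum d1 d2 d3 v = 0).
    { intros v Fv. destruct (Ha v Fv) as [ -> | [ -> | -> ]]; unfold d1, d2, d3; bash. }
    destruct (Ha p Hp) as [ -> | [ -> | -> ]]; destruct (Ha q Hq) as [ -> | [ -> | -> ]]; try congruence;
    first [ apply (nf F HFT Hfull a1 a2 a1 ltac:(assumption) ltac:(assumption) ltac:(assumption) d1 d2 d3 Hz); unfold d1, d2, d3; bash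
          | apply (nf F HFT Hfull a1 a1 a3 ltac:(assumption) ltac:(assumption) ltac:(assumption) d1 d2 d3 Hz); unfold d1, d2, d3; bash
          | apply (nf F HFT Hfull a2 a2 a3 ltac:(assumption) ltac:(assumption) ltac:(assumption) d1 d2 d3 Hz); unfold d1, d2, d3; bash ].
Qed.

Lemma fresh_b0 (l : list Om) : forall k, exists n, (k <= n)%nat /\ (1 <= n)%nat /\ ~ In (b0 n) l.
Proof.
  induction l as [|a l IH]; intros k.
  - exists (S k); repeat split; [lia|lia|intros []].
  - destruct (IH k) as [n (Hk & Hn & Hni)].
    destruct (classic (a = b0 n)) as [Ea|Ea].
    + destruct (IH (S n)) as [m (Hk' & Hm & Hmi)]. exists m. repeat split; try lia.
      intros [E|E]; [|tauto]. subst a.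
      assert (n = m) by (apply (blk_inj (b0 m) n m); auto; unfold inblk; [rewrite <- E|]; tauto). lia.
    + exists n. repeat split; auto. intros [E|E]; [congruence|tauto].
Qed.

Lemma part3 : forall p q, T p -> T q -> related X1 X2 X3 T p q -> p = q.
Proof.
  intros p q Tp Tq [F (Hfin & HFT & Hfull & Fp & Fq)].
  apply NNPP; intro Hne. exact (key3 F Hfin HFT Hfull p q Fp Fq Hne).
Qed.

Lemma part4 : forall l : list Om, exists p, T p /\ forall q, In q l -> ~ related X1 X2 X3 T p q.
Proof.
  intros l. destruct (fresh_b0 l O) as [n (_ & Hn & Hni)].
  exists (b0 n). split; [apply Tb0; auto|].
  intros q Hq Hr. assert (Tq : T q) by (destruct Hr as [F (_ & HFT & _ & _ & Fq)]; auto).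
  pose proof (part3 _ _ (Tb0 n Hn) Tq Hr). subst q. contradiction.
Qed.

End Main.

Theorem mainTheorem5 (X1 X2 X3 : Type)
  (x1 y1 : X1) (x2 y2 : X2) (x3 z3 : X3)
  (al1 : nat -> X1) (al2 : nat -> X2) (al3 : nat -> X3)
  (Hdist : distinct_data X1 X2 X3 x1 y1 x2 y2 x3 z3 al1 al2 al3) :
  let T := Tset X1 X2 X3 x1 y1 x2 y2 x3 z3 al1 al2 al3 in
  good X1 X2 X3 T /\ full X1 X2 X3 T /\
  (* every related component is a singleton *)
  (forall p q, T p -> T q -> related X1 X2 X3 T p q -> p = q) /\
  (* infinitely many related components *)
  (forall l : list (Omega X1 X2 X3),
     exists p, T p /\ forall q, In q l -> ~ related X1 X2 X3 T p q).
Proof.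
  destruct Hdist as (H1 & H2 & H3 & H4 & H5 & H6 & H7 & H8 & H9).
  intros T. split; [|split; [|split]].
  - eapply goodT; eassumption.
  - eapply fullT; eassumption.
  - eapply part3; eassumption.
  - eapply part4; eassumption.
Qed.
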